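(* Let $(L,\sim,\preceq,p)$ and $(L,\sim,\preceq,p')$ be planar dendritic systems with the same $L$, $\sim$ and $\preceq$. If $p(i,j)=p'(i,j)$ for all $i,j\in L$ (where $i$ denotes the class of $(i,i)$), then $p=p'$. That is, $p$ is uniquely determined by $\preceq$ and $\{p(i,j):i,j\in L\}$.
   Context: Let $L\subseteq\mathbb{N}$ be finite or countably infinite. A planar dendritic system $(L,\sim,\preceq,p)$ consists of an equivalence relation $\sim$ on $L\times L$, whose set of classes is denoted $T$ (the class of $(i,j)$ is written $(i,j)$); a partial order $\preceq$ on $T$; and a function $p:T\times T\to\{0,1,-1\}$, such that for all $i,j,k,\ell\in L$: (C1) $(i,j)\sim(j,i)$, and $(i,j)\sim(k,k)$ iff $i=j=k$; (C2) $(i,j)\preceq(i,i)$; (C3) $(i,j)\preceq(k,\ell)$ and $(k,\ell)\preceq(i,j)$ iff $(i,j)\sim(k,\ell)$; (C4) the $\preceq$-minimum of $\{(i,j),(k,\ell),(i,\ell),(i,k),(j,\ell),(j,k)\}$ exists in $T$; and for all $x,y,z\in T$: (P1) $p(x,y)=-p(y,x)$; (P2) $p(x,y)=0$ iff $x\preceq y$ or $y\preceq x$; (P3) if $p(x,y)=1$ and $p(y,z)=1$ then $p(x,z)=1$; (P4) if $p(x,y)=1$ and $y\preceq z$ then $p(x,z)=1$. The classes $(i,i)$ are the leaves, written $i$. *)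

(* Defs.v *)
From Stdlib Require Import ZArith List.
Open Scope Z_scope.

(* A planar dendritic system (L, ~, <=, p).
   - L : the index set, a subset of nat (given as a predicate).
   - The equivalence relation ~ on L x L is represented by its quotient map
     [cls : nat -> nat -> T] onto its set of classes T:
       (i,j) ~ (k,l)  <->  cls i j = cls k l   (for i j k l in L),
     and every element of T is the class of some (i,j) in L x L.
   - le : the partial order on T.
   - p  : T -> T -> Z with values in {0,1,-1}. *)


Record dendritic_system (L : nat -> Prop) (T : Type) (cls : nat -> nat -> T)
    (le : T -> T -> Prop) : Prop := {
  ds_surj : forall x : T, exists i j, L i /\ L j /\ cls i j = x;
  ds_refl : forall x, le x x;
  ds_trans : forall x y z, le x y -> le y z -> le x z;
  ds_antisym : forall x y, le x y -> le y x -> x = y;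
  ds_C1_sym : forall i j, L i -> L j -> cls i j = cls j i;
  ds_C1_diag : forall i j k, L i -> L j -> L k ->
      (cls i j = cls k k <-> (i = j /\ j = k));
  ds_C2 : forall i j, L i -> L j -> le (cls i j) (cls i i);
  ds_C3 : forall i j k l, L i -> L j -> L k -> L l ->
      (le (cls i j) (cls k l) /\ le (cls k l) (cls i j) <-> cls i j = cls k l);
  ds_C4 : forall i j k l, L i -> L j -> L k -> L l ->
      let S := cls i j :: cls k l :: cls i l :: cls i k :: cls j l :: cls j k :: nil in
      exists m, In m S /\ forall y, In y S -> le m y
}.

Record planar_dendritic_system (L : nat -> Prop) (T : Type) (cls : nat -> nat -> T)
    (le : T -> T -> Prop) (p : T -> T -> Z) : Prop := {
  pds_dendritic : dendritic_system L T cls le;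
  pds_range : forall x y, p x y = 0 \/ p x y = 1 \/ p x y = -1;
  pds_P1 : forall x y, p x y = - p y x;
  pds_P2 : forall x y, p x y = 0 <-> (le x y \/ le y x);
  pds_P3 : forall x y z, p x y = 1 -> p y z = 1 -> p x z = 1;
  pds_P4 : forall x y z, p x y = 1 -> le y z -> p x z = 1
}.

(* Main.v *)
Require Import Defs.
From Stdlib Require Import ZArith Lia.
Open Scope Z_scope.

Lemma lift1 L T cls le p (H : planar_dendritic_system L T cls le p) :
  forall x y a b, le x a -> le y b -> p x y = 1 -> p a b = 1.
Proof.
  intros x y a b Ha Hb Hxy.
  destruct H as [D R P1 P2 P3 P4].
  assert (Hxb : p x b = 1) by (eapply P4; eauto).
  assert (Hxa : p x a = 0) by (apply P2; left; exact Ha).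
  destruct (R a b) as [E|[E|E]]; auto.
  - apply P2 in E. destruct E as [E|E].
    + assert (p x b = 0) by (apply P2; left; eapply (ds_trans _ _ _ _ D); eauto). lia.
    + assert (p x a = 1) by (eapply P4; eauto). lia.
  - assert (p b a = 1) by (rewrite P1; lia).
    assert (p x a = 1) by (eapply P3; eauto). lia.
Qed.

Theorem lemma2p2 (L : nat -> Prop) (T : Type) (cls : nat -> nat -> T)
    (le : T -> T -> Prop) (p p' : T -> T -> Z) :
  planar_dendritic_system L T cls le p ->
  planar_dendritic_system L T cls le p' ->
  (forall i j, L i -> L j -> p (cls i i) (cls j j) = p' (cls i i) (cls j j)) ->
  forall x y : T, p x y = p' x y.
Proof.
  intros H H' E x y.
  pose proof (pds_dendritic _ _ _ _ _ H) as D.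
  destruct (ds_surj _ _ _ _ D x) as [i [j [Li [Lj Ex]]]].
  destruct (ds_surj _ _ _ _ D y) as [k [l [Lk [Ll Ey]]]].
  assert (Ha : le x (cls i i)) by (subst; apply (ds_C2 _ _ _ _ D); auto).
  assert (Hb : le y (cls k k)) by (subst; apply (ds_C2 _ _ _ _ D); auto).
  pose proof (E i k Li Lk) as Eik.
  assert (A1 : p x y = 1 -> p (cls i i) (cls k k) = 1) by (apply (lift1 _ _ _ _ _ H); auto).
  assert (A2 : p x y = -1 -> p (cls i i) (cls k k) = -1).
  { intro Q. rewrite (pds_P1 _ _ _ _ _ H). rewrite (pds_P1 _ _ _ _ _ H) in Q.
    assert (p (cls k k) (cls i i) = 1) by (apply (lift1 _ _ _ _ _ H y x); auto; lia). lia. }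
  assert (B1 : p' x y = 1 -> p' (cls i i) (cls k k) = 1) by (apply (lift1 _ _ _ _ _ H'); auto).
  assert (B2 : p' x y = -1 -> p' (cls i i) (cls k k) = -1).
  { intro Q. rewrite (pds_P1 _ _ _ _ _ H'). rewrite (pds_P1 _ _ _ _ _ H') in Q.
    assert (p' (cls k k) (cls i i) = 1) by (apply (lift1 _ _ _ _ _ H' y x); auto; lia). lia. }
  assert (Z : p x y = 0 <-> p' x y = 0).
  { rewrite (pds_P2 _ _ _ _ _ H), (pds_P2 _ _ _ _ _ H'). tauto. }
  destruct (pds_range _ _ _ _ _ H x y) as [F|[F|F]];
  destruct (pds_range _ _ _ _ _ H' x y) as [G|[G|G]]; try lia;
  try (apply Z in F; lia); try (apply Z in G; lia).
Qed.
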